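(* Let $\mathcal C$ be a nondegenerate conic section in the (complex or real) projective plane, equipped with a rational parametrization, i.e. a birational bijection $\mathbb{P}^1\to\mathcal C$; for a point of $\mathcal C$ denoted by a capital letter, the corresponding lowercase letter denotes its parameter value. (1) Let the broken lines $X_1X_2X_3X_4$ and $Y_1Y_2Y_3Y_4$ be inscribed in $\mathcal C$. Then the intersection points $A_j=X_jX_{j+1}\cap Y_jY_{j+1}$, $j=1,2,3$, are collinear if and only if \[ (x_1,y_2,x_3,y_4)=(y_1,x_2,y_3,x_4). \] (2) Let the broken lines $Y_2Y_1UX_1X_2$ and $PVQ$ be inscribed in $\mathcal C$. Then the points \[ A=X_1X_2\cap Y_1Y_2,\quad B=UX_1\cap PV,\quad C=UY_1\cap QV \] are collinear if and only if \[ (p,u,q,x_2,y_1,v,x_1,y_2)=1. \]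
   Context: The cross-ratio is $(a,b,c,d)=\frac{a-b}{b-c}\cdot\frac{c-d}{d-a}$. More generally, the multi-ratio of an even number of arguments is $(a_1,a_2,\dots,a_{2k})=\prod_{i=1}^{k}\frac{a_{2i-1}-a_{2i}}{a_{2i}-a_{2i+1}}$ with $a_{2k+1}=a_1$, i.e. $(a,b,\dots,c,d)=\frac{a-b}{b-\cdots}\cdots\frac{c-d}{d-a}$. $PQ$ denotes the line through $P$ and $Q$; the points are assumed to be in general position so that all lines and intersections are defined. *)

(* Defs.v *)
From mathcomp Require Import all_boot all_order all_algebra.
Set Implicit Arguments. Unset Strict Implicit. Unset Printing Implicit Defensive.
Import Order.TTheory GRing.Theory Num.Theory.
Local Open Scope ring_scope.

(* Points of P^1 are homogeneous pairs (s,t) (parameter s/t,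
   (1,0) = infinity); points and lines of P^2 are nonzero row vectors of F^3. *)
Section Defs.
Variable F : fieldType.

(* homogeneous version of the difference a - b of parameters *)
Definition det2 (a b : F * F) : F := a.1 * b.2 - a.2 * b.1.

(* multi-ratio (a_1,...,a_2k) = prod_i (a_{2i-1}-a_{2i})/(a_{2i}-a_{2i+1}), a_{2k+1}=a_1 *)
Definition multiratio (s : seq (F * F)) : F :=
  \prod_(i < (size s)./2)
     (det2 (nth (0,0) s i.*2) (nth (0,0) s i.*2.+1)
      / det2 (nth (0,0) s i.*2.+1) (nth (0,0) s (i.*2.+2 %% size s))).

Definition P1_distinct (s : seq (F * F)) : Prop :=
  forall i j : nat, (i < j < size s)%N -> det2 (nth (0,0) s i) (nth (0,0) s j) != 0.

Definition veronese (a : F * F) : 'rV[F]_3 :=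
  \row_(i < 3) (a.1 ^+ (2 - i) * a.2 ^+ i).

(* The rational parametrization of a nondegenerate conic: every birational
   bijection P^1 -> C onto a nondegenerate conic is a ~> veronese a *m M with M
   invertible. *)
Definition conic_param (M : 'M[F]_3) (a : F * F) : 'rV[F]_3 := veronese a *m M.

Definition coord (u : 'rV[F]_3) (i : nat) : F := u 0 (inord i).

Definition cross (u w : 'rV[F]_3) : 'rV[F]_3 :=
  \row_(i < 3) (coord u (i.+1 %% 3) * coord w (i.+2 %% 3)
                - coord u (i.+2 %% 3) * coord w (i.+1 %% 3)).

Definition join (P Q : 'rV[F]_3) : 'rV[F]_3 := cross P Q.
Definition meet (l m : 'rV[F]_3) : 'rV[F]_3 := cross l m.

Definition collinear (A B C : 'rV[F]_3) : Prop :=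
  \det (col_mx A (col_mx B C) : 'M_3) = 0.

End Defs.

(* Main.v *)
Require Import Defs.
From mathcomp Require Import all_boot all_order all_algebra.
From mathcomp Require Import ring.
Import Order.TTheory GRing.Theory Num.Theory.
Local Open Scope ring_scope.

Set Implicit Arguments. Unset Strict Implicit.
Section S.
Variable F : fieldType.
Local Notation cd := (@Defs.coord F).
Definition Mc (A : 'M[F]_3) (a b : nat) : F := A (inord a) (inord b).
Lemma McE (A : 'M[F]_3) (i j : 'I_3) : A i j = Mc A i j.
Proof. by rewrite /Mc !inord_val. Qed.
Lemma coordE (u : 'rV[F]_3) (j : 'I_3) : u 0 j = cd u j.
Proof. by rewrite /Defs.coord inord_val. Qed.

Definition det3 (A : 'M[F]_3) :=
  Mc A 0 0 * (Mc A 1 1 * Mc A 2 2 - Mc A 1 2 * Mc A 2 1)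
  - Mc A 0 1 * (Mc A 1 0 * Mc A 2 2 - Mc A 1 2 * Mc A 2 0)
  + Mc A 0 2 * (Mc A 1 0 * Mc A 2 1 - Mc A 1 1 * Mc A 2 0).

Lemma det3E (A : 'M[F]_3) : \det A = det3 A.
Proof.
rewrite (expand_det_row _ 0) !big_ord_recr big_ord0 /= /cofactor.
rewrite !(expand_det_row _ 0) !big_ord_recr big_ord0 /= /cofactor.
rewrite !det_mx11 !mxE !McE /=.
rewrite !big_ord0 /bump /= /det3; ring.
Qed.

Lemma rv3P (u w : 'rV[F]_3) :
  cd u 0 = cd w 0 -> cd u 1 = cd w 1 -> cd u 2 = cd w 2 -> u = w.
Proof.
move=> h0 h1 h2; apply/rowP => j; rewrite !coordE.
by case: j => [[|[|[|//]]] Hj] /=.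
Qed.

Lemma cd_cross0 u w : cd (cross u w) 0 = cd u 1 * cd w 2 - cd u 2 * cd w 1.
Proof. by rewrite {1}/Defs.coord mxE inordK. Qed.
Lemma cd_cross1 u w : cd (cross u w) 1 = cd u 2 * cd w 0 - cd u 0 * cd w 2.
Proof. by rewrite {1}/Defs.coord mxE inordK. Qed.
Lemma cd_cross2 u w : cd (cross u w) 2 = cd u 0 * cd w 1 - cd u 1 * cd w 0.
Proof. by rewrite {1}/Defs.coord mxE inordK. Qed.
Lemma cd_scale c u k : cd (c *: u) k = c * cd u k.
Proof. by rewrite /Defs.coord mxE. Qed.
Lemma cd_mul u (A : 'M[F]_3) k :
  cd (u *m A) k = cd u 0 * Mc A 0 k + cd u 1 * Mc A 1 k + cd u 2 * Mc A 2 k.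
Proof.
rewrite {1}/Defs.coord mxE !big_ord_recr big_ord0 /= !coordE !McE /=.
by rewrite /Mc !inord_val add0r.
Qed.
Lemma cd_ver0 a : cd (veronese a) 0 = a.1 ^+ 2.
Proof. by rewrite /Defs.coord mxE inordK // expr0 mulr1. Qed.
Lemma cd_ver1 a : cd (veronese a) 1 = a.1 * a.2.
Proof. by rewrite /Defs.coord mxE inordK // expr1 expr1. Qed.
Lemma cd_ver2 a : cd (veronese a) 2 = a.2 ^+ 2.
Proof. by rewrite /Defs.coord mxE inordK // expr0 mul1r. Qed.

Definition mkv (a b c : F) : 'rV[F]_3 := \row_(i < 3) [:: a; b; c]`_i.
Lemma cd_mkv0 a b c : cd (mkv a b c) 0 = a.
Proof. by rewrite /Defs.coord mxE inordK. Qed.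
Lemma cd_mkv1 a b c : cd (mkv a b c) 1 = b.
Proof. by rewrite /Defs.coord mxE inordK. Qed.
Lemma cd_mkv2 a b c : cd (mkv a b c) 2 = c.
Proof. by rewrite /Defs.coord mxE inordK. Qed.

Definition nx (i : nat) : nat := match i with 0 => 1 | 1 => 2 | _ => 0 end.
Definition pv (i : nat) : nat := match i with 0 => 2 | 1 => 0 | _ => 1 end.
Definition cofe (A : 'M[F]_3) (i j : nat) :=
  Mc A (nx i) (nx j) * Mc A (pv i) (pv j) - Mc A (nx i) (pv j) * Mc A (pv i) (nx j).
Definition cofM (A : 'M[F]_3) : 'M[F]_3 := \matrix_(i < 3, j < 3) cofe A i j.
Lemma Mc_cof A a b : (a < 3)%N -> (b < 3)%N -> Mc (cofM A) a b = cofe A a b.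
Proof. by move=> ha hb; rewrite /Mc mxE !inordK. Qed.

Lemma Mc_scale c (A : 'M[F]_3) i j : Mc (c *: A) i j = c * Mc A i j.
Proof. by rewrite /Mc mxE. Qed.
Ltac cdsimp := do ?rewrite ?cd_cross0 ?cd_cross1 ?cd_cross2 ?cd_scale ?cd_mul
  ?cd_ver0 ?cd_ver1 ?cd_ver2 ?cd_mkv0 ?cd_mkv1 ?cd_mkv2 ?Mc_cof ?Mc_scale // /cofe /=.

Lemma cross_mul u w A : cross (u *m A) (w *m A) = cross u w *m cofM A.
Proof. apply: rv3P; cdsimp; ring. Qed.

Lemma cof_cof A : cofM (cofM A) = det3 A *: A.
Proof.
apply/matrixP => i j; rewrite [RHS]mxE !McE.
case: i => [[|[|[|//]]] Hi]; case: j => [[|[|[|//]]] Hj];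
 rewrite /= !Mc_cof // /cofe /= !Mc_cof // /cofe /= /det3; ring.
Qed.

Definition Lv (a b : F * F) := mkv (a.2*b.2) (-(a.1*b.2 + a.2*b.1)) (a.1*b.1).
Lemma cross_ver a b : cross (veronese a) (veronese b) = det2 a b *: Lv a b.
Proof. apply: rv3P; rewrite /Lv /det2; cdsimp; ring. Qed.

Lemma meetE M a b c d :
  meet (join (conic_param M a) (conic_param M b))
       (join (conic_param M c) (conic_param M d))
  = (det2 a b * det2 c d * det3 M) *: (cross (Lv a b) (Lv c d) *m M).
Proof.
rewrite /Defs.meet /Defs.join /conic_param !cross_mul cof_cof !cross_ver.
apply: rv3P; cdsimp; ring.
Qed.

Definition det3v u v w :=
  cd u 0 * (cd v 1 * cd w 2 - cd v 2 * cd w 1)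
  - cd u 1 * (cd v 0 * cd w 2 - cd v 2 * cd w 0)
  + cd u 2 * (cd v 0 * cd w 1 - cd v 1 * cd w 0).

Lemma Mc_col (A B C : 'rV[F]_3) j : (j < 3)%N ->
  [/\ Mc (col_mx A (col_mx B C) : 'M_3) 0 j = cd A j,
      Mc (col_mx A (col_mx B C) : 'M_3) 1 j = cd B j &
      Mc (col_mx A (col_mx B C) : 'M_3) 2 j = cd C j].
Proof.
move=> hj; rewrite /Mc /Defs.coord; split.
- have -> : (inord 0 : 'I_(1 + (1 + 1))) = lshift (1 + 1) 0
    by apply/val_inj; rewrite /= inordK.
  exact: (col_mxEu A (col_mx B C)).
- have -> : (inord 1 : 'I_(1 + (1 + 1))) = rshift 1 (lshift 1 0)
    by apply/val_inj; rewrite /= inordK.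
  by rewrite (col_mxEd A (col_mx B C)) col_mxEu.
- have -> : (inord 2 : 'I_(1 + (1 + 1))) = rshift 1 (rshift 1 0)
    by apply/val_inj; rewrite /= inordK.
  by rewrite (col_mxEd A (col_mx B C)) col_mxEd.
Qed.

Lemma collinearE A B C : collinear A B C <-> det3v A B C = 0.
Proof.
rewrite /collinear det3E /det3.
have [a0 b0 c0] := @Mc_col A B C 0 isT.
have [a1 b1 c1] := @Mc_col A B C 1 isT.
have [a2 b2 c2] := @Mc_col A B C 2 isT.
by rewrite a0 b0 c0 a1 b1 c1 a2 b2 c2.
Qed.

Lemma det3v_mul k1 k2 k3 P1 P2 P3 M :
  det3v (k1 *: (P1 *m M)) (k2 *: (P2 *m M)) (k3 *: (P3 *m M))
  = k1 * k2 * k3 * det3 M * det3v P1 P2 P3.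
Proof. rewrite /det3v /det3; cdsimp; ring. Qed.

Lemma core1 x1 x2 x3 x4 y1 y2 y3 y4 :
  det3v (cross (Lv x1 x2) (Lv y1 y2)) (cross (Lv x2 x3) (Lv y2 y3))
        (cross (Lv x3 x4) (Lv y3 y4))
  = - (det2 x2 y2 * det2 x3 y3) *
    (det2 x1 y2 * det2 x3 y4 * (det2 x2 y3 * det2 x4 y1)
     - det2 y1 x2 * det2 y3 x4 * (det2 y2 x3 * det2 y4 x1)).
Proof. rewrite /det3v /Lv /det2; cdsimp; ring. Qed.

Lemma core2 y2 y1 u x1 x2 p v q :
  det3v (cross (Lv x1 x2) (Lv y1 y2)) (cross (Lv u x1) (Lv p v))
        (cross (Lv u y1) (Lv q v))
  = (det2 u v * det2 x1 y1) *
    (det2 p u * det2 q x2 * det2 y1 v * det2 x1 y2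
     - det2 u q * det2 x2 y1 * det2 v x1 * det2 y2 p).
Proof. rewrite /det3v /Lv /det2; cdsimp; ring. Qed.

Lemma frac4 (a b c d e f g h : F) : b != 0 -> d != 0 -> f != 0 -> h != 0 ->
  (1 * (a / b) * (c / d) = 1 * (e / f) * (g / h)) <->
  (a * c * (f * h) - e * g * (b * d) = 0).
Proof.
move=> hb hd hf hh; rewrite !mul1r !mulf_div; split => E.
- move/eqP: E; rewrite eqr_div ?mulf_neq0 // => /eqP ->; exact: subrr.
- apply/eqP; rewrite eqr_div ?mulf_neq0 //; apply/eqP.
  by move/eqP: E; rewrite subr_eq0 => /eqP.
Qed.

Lemma frac8 (a b c d e f g h : F) : b != 0 -> d != 0 -> f != 0 -> h != 0 ->
  (1 * (a / b) * (c / d) * (e / f) * (g / h) = 1) <->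
  (a * c * e * g - b * d * f * h = 0).
Proof.
move=> hb hd hf hh; rewrite !mul1r !mulf_div.
have hy : b * d * f * h != 0 by rewrite !mulf_neq0.
split => E.
- by rewrite -[a * c * e * g](divfK hy) E mul1r subrr.
- by move/eqP: E; rewrite subr_eq0 => /eqP ->; rewrite divff.
Qed.

Lemma mul_eq0_iff (c x : F) : c != 0 -> (c * x = 0 <-> x = 0).
Proof.
move=> hc; split => [E|->]; last by rewrite mulr0.
by move/eqP: E; rewrite mulf_eq0 (negbTE hc) /= => /eqP.
Qed.

Lemma mul2_eq0_iff (c k x : F) : c != 0 -> k != 0 -> (c * (k * x) = 0 <-> x = 0).
Proof. move=> hc hk; rewrite mulrA; apply: mul_eq0_iff; exact: mulf_neq0. Qed.

Lemma det2_swap (a b : F * F) : det2 a b != 0 -> det2 b a != 0.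
Proof.
have -> : det2 b a = - det2 a b by rewrite /det2; ring.
by rewrite oppr_eq0.
Qed.
End S.

Theorem lemma1 (F : numFieldType) (M : 'M[F]_3) (hM : M \in unitmx) :
  let Pt := conic_param M in
  (forall x1 x2 x3 x4 y1 y2 y3 y4 : F * F,
     P1_distinct [:: x1; x2; x3; x4; y1; y2; y3; y4] ->
     let A1 := meet (join (Pt x1) (Pt x2)) (join (Pt y1) (Pt y2)) in
     let A2 := meet (join (Pt x2) (Pt x3)) (join (Pt y2) (Pt y3)) in
     let A3 := meet (join (Pt x3) (Pt x4)) (join (Pt y3) (Pt y4)) in
     collinear A1 A2 A3 <->
     multiratio [:: x1; y2; x3; y4] = multiratio [:: y1; x2; y3; x4])
  /\
  (forall y2 y1 u x1 x2 p v q : F * F,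
     P1_distinct [:: y2; y1; u; x1; x2; p; v; q] ->
     let A := meet (join (Pt x1) (Pt x2)) (join (Pt y1) (Pt y2)) in
     let B := meet (join (Pt u) (Pt x1)) (join (Pt p) (Pt v)) in
     let C := meet (join (Pt u) (Pt y1)) (join (Pt q) (Pt v)) in
     collinear A B C <->
     multiratio [:: p; u; q; x2; y1; v; x1; y2] = 1).
Proof.
have hdM : det3 M != 0 by move: hM; rewrite unitmxE unitfE det3E.
move=> Pt; split.
- move=> x1 x2 x3 x4 y1 y2 y3 y4 H A1 A2 A3.
  rewrite /A1 /A2 /A3 /Pt !meetE collinearE !det3v_mul core1.
  rewrite /multiratio /= !big_ord_recr !big_ord0 /=.
  have h01 : det2 x1 x2 != 0 := H 0 1 isT.
  have h45 : det2 y1 y2 != 0 := H 4 5 isT.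
  have h12 : det2 x2 x3 != 0 := H 1 2 isT.
  have h56 : det2 y2 y3 != 0 := H 5 6 isT.
  have h23 : det2 x3 x4 != 0 := H 2 3 isT.
  have h67 : det2 y3 y4 != 0 := H 6 7 isT.
  have h15 : det2 x2 y2 != 0 := H 1 5 isT.
  have h26 : det2 x3 y3 != 0 := H 2 6 isT.
  have h25 : det2 y2 x3 != 0 := det2_swap (H 2 5 isT).
  have h07 : det2 y4 x1 != 0 := det2_swap (H 0 7 isT).
  have h16 : det2 x2 y3 != 0 := H 1 6 isT.
  have h34 : det2 x4 y1 != 0 := H 3 4 isT.
  apply: (iff_trans _ (iff_sym (frac4 _ _ _ _ h25 h07 h16 h34))).
  apply: mul2_eq0_iff.
  - by rewrite !mulf_neq0.
  - by rewrite oppr_eq0 !mulf_neq0.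
- move=> y2 y1 u x1 x2 p v q H A B C.
  rewrite /A /B /C /Pt !meetE collinearE !det3v_mul core2.
  rewrite /multiratio /= !big_ord_recr !big_ord0 /=.
  have h34 : det2 x1 x2 != 0 := H 3 4 isT.
  have h01 : det2 y1 y2 != 0 := det2_swap (H 0 1 isT).
  have h23' : det2 u x1 != 0 := H 2 3 isT.
  have h56 : det2 p v != 0 := H 5 6 isT.
  have h12 : det2 u y1 != 0 := det2_swap (H 1 2 isT).
  have h67 : det2 q v != 0 := det2_swap (H 6 7 isT).
  have h26 : det2 u v != 0 := H 2 6 isT.
  have h13 : det2 x1 y1 != 0 := det2_swap (H 1 3 isT).
  have h27 : det2 u q != 0 := H 2 7 isT.
  have h14 : det2 x2 y1 != 0 := det2_swap (H 1 4 isT).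
  have h36 : det2 v x1 != 0 := det2_swap (H 3 6 isT).
  have h05 : det2 y2 p != 0 := H 0 5 isT.
  apply: (iff_trans _ (iff_sym (frac8 _ _ _ _ h27 h14 h36 h05))).
  apply: mul2_eq0_iff.
  - by rewrite !mulf_neq0.
  - by rewrite !mulf_neq0.
Qed.
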